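(* Let $X$ be the vertex set of a connected simplicial graph with bounded geometry, equipped with the shortest path metric, which is $\delta$-hyperbolic, and fix $e\in X$ and $p\geq 1$. For $x\in X$, $k\in\mathbb{N}$, $n\in\mathbb{N}\setminus\{0\}$, let $F_{x,k,n}$ be the set of all points of $X\setminus B(e;3\delta)$ lying on $g([n,2n])$ for some geodesic $g$ from some $y$ with $d(x,y)\leq k$ to $e$ (parametrised by arc length starting at $y$), let $F(x,k,n)\in\ell^p(X)$ be its characteristic function, and set \[ H(x,n)=\frac{1}{n}\sum_{0\leq k\leq n/4}F(x,k,n). \] Then there exists a constant $C$ such that for all $R\geq 0$, all $n\geq 1$ and all $x,y\in X$ with $d(x,y)\leq R$, \[ \|H(x,n)-H(y,n)\|_p\leq 2C(R+1)\,n^{-\frac{p-1}{p}}. \]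
   Context: Bounded geometry: for every $r$ there is a uniform bound on the cardinality of balls of radius $r$. $\delta$-hyperbolicity in the Rips sense: each side of a geodesic triangle lies in the $\delta$-neighbourhood of the union of the other two. *)

(* Defs.v *)
From HB Require Import structures.
From mathcomp Require Import all_boot all_order all_algebra.
From mathcomp Require Import all_classical all_reals all_analysis.
Set Implicit Arguments. Unset Strict Implicit. Unset Printing Implicit Defensive.
Import Order.TTheory GRing.Theory Num.Theory.
Local Open Scope classical_set_scope.
Local Open Scope ring_scope.

Section Graph.
Variables (T : choiceType) (adj : T -> T -> Prop).

Inductive walk : T -> T -> nat -> Prop :=
| walk0 x : walk x x 0
| walkS x y z n : adj x y -> walk y z n -> walk x z n.+1.

Definition simplicial_graph : Prop :=
  (forall x y, adj x y -> adj y x) /\ (forall x, ~ adj x x).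

Definition connected_graph : Prop := forall x y, exists n, walk x y n.

Lemma walk_ex_bool x y : (exists n, walk x y n) -> exists n, `[< walk x y n >].
Proof. by move=> [n hn]; exists n; apply/asboolP. Qed.

(* shortest path distance (0 if no path; irrelevant under connectedness) *)
Definition gdist (x y : T) : nat :=
  match pselect (exists n, walk x y n) with
  | left h => ex_minn (walk_ex_bool h)
  | right _ => 0%N
  end.

Definition bounded_geometry : Prop :=
  forall r : nat, exists N : nat, forall (x : T) (s : seq T),
    uniq s -> (forall z, z \in s -> (gdist x z <= r)%N) -> (size s <= N)%N.

Definition geodesic (g : nat -> T) (L : nat) (y z : T) : Prop :=
  g 0%N = y /\ g L = z /\
  forall i j, (i <= L)%N -> (j <= L)%N -> gdist (g i) (g j) = ((i - j) + (j - i))%N.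

Definition rips_hyperbolic (R : realType) (delta : R) : Prop :=
  forall (x y z : T) (L1 L2 L3 : nat) (g1 g2 g3 : nat -> T),
    geodesic g1 L1 x y -> geodesic g2 L2 y z -> geodesic g3 L3 x z ->
    forall i, (i <= L1)%N ->
      exists j, ((j <= L2)%N /\ (gdist (g1 i) (g2 j))%:R <= delta)
             \/ ((j <= L3)%N /\ (gdist (g1 i) (g3 j))%:R <= delta).

Definition Fset (R : realType) (delta : R) (e x : T) (k n : nat) : set T :=
  [set z | ~ ((gdist e z)%:R <= 3 * delta) /\
     exists (y : T) (L : nat) (g : nat -> T) (i : nat),
       [/\ (gdist x y <= k)%N, geodesic g L y e,
           (n <= i <= 2 * n)%N, (i <= L)%N & g i = z]].

Definition Hfun (R : realType) (delta : R) (e x : T) (n : nat) : T -> R :=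
  fun z => n%:R^-1 * \sum_(0 <= k < (n %/ 4).+1) (\1_(Fset delta e x k n) z : R).

End Graph.

Definition lpnorm (R : realType) (T : choiceType) (p : R) (f : T -> R) : \bar R :=
  poweR (\esum_(z in [set: T]) ((`|f z| `^ p)%:E)) p^-1.

(* Main.v *)
Require Import Defs.
From HB Require Import structures.
From mathcomp Require Import all_boot all_order all_algebra.
From mathcomp Require Import all_classical all_reals all_analysis.
From mathcomp Require Import zify ring lra.
Import Order.TTheory GRing.Theory Num.Theory.
Local Open Scope classical_set_scope.
Set Implicit Arguments. Unset Strict Implicit. Unset Printing Implicit Defensive.

Section GraphLemmas.
Variables (T : choiceType) (adj : T -> T -> Prop).
Hypothesis symA : forall x y, adj x y -> adj y x.
Hypothesis conn : connected_graph adj.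

Lemma walk_cat x y z a b : walk adj x y a -> walk adj y z b -> walk adj x z (a + b).
Proof.
elim=> [//|u v w n huv _ IH] hb; rewrite addSn; exact: (walkS huv (IH hb)).
Qed.

Lemma walk_rev x y n : walk adj x y n -> walk adj y x n.
Proof.
elim=> [u|u v w k huv _ IH]; first exact: walk0.
have := walk_cat IH (walkS (symA huv) (walk0 adj u)); rewrite addn1. exact: id.
Qed.

Lemma gdist_spec x y : walk adj x y (gdist adj x y) /\ forall m, walk adj x y m -> (gdist adj x y <= m)%N.
Proof.
rewrite /gdist; case: pselect => [h|h]; last by exfalso; apply: h; apply: conn.
case: ex_minnP => m /asboolP hm hmin; split=> // k hk; apply: hmin; exact/asboolP.
Qed.

Lemma gdist_walk x y : walk adj x y (gdist adj x y).
Proof. by case: (gdist_spec x y). Qed.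

Lemma gdist_min x y m : walk adj x y m -> (gdist adj x y <= m)%N.
Proof. by case: (gdist_spec x y) => _; apply. Qed.

Lemma gdist_xx x : gdist adj x x = 0%N.
Proof. by apply/eqP; rewrite -leqn0; apply: gdist_min; apply: walk0. Qed.

Lemma gdist_tri x y z : (gdist adj x z <= gdist adj x y + gdist adj y z)%N.
Proof. apply: gdist_min; apply: walk_cat; exact: gdist_walk. Qed.

Lemma gdist_sym x y : gdist adj x y = gdist adj y x.
Proof.
apply/eqP; rewrite eqn_leq; apply/andP; split; apply: gdist_min;
  apply: walk_rev; exact: gdist_walk.
Qed.

Lemma walk0_eq x y : walk adj x y 0 -> x = y.
Proof. by move=> h; inversion h. Qed.

Lemma gdist_eq0 x y : gdist adj x y = 0%N -> x = y.
Proof. by move=> h; have := gdist_walk x y; rewrite h; apply: walk0_eq. Qed.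

Lemma gdist_adj x y : adj x y -> (gdist adj x y <= 1)%N.
Proof. by move=> h; apply: gdist_min; exact: (walkS h (walk0 adj y)). Qed.

Lemma gdist_step x y : (0 < gdist adj x y)%N ->
  exists w, adj x w /\ gdist adj w y = (gdist adj x y).-1.
Proof.
have := gdist_walk x y; case E: (gdist adj x y) => [//|k] h _.
inversion h; subst.
exists y0; split=> //.
have h1 : (gdist adj y0 y <= k)%N by apply: gdist_min.
have h2 := gdist_tri x y0 y; have h3 := gdist_adj H0.
rewrite /=; lia.
Qed.

Lemma geodesic_ex a b : exists g, geodesic adj g (gdist adj a b) a b.
Proof.
have : forall u, exists w, (0 < gdist adj u b)%N ->
    adj u w /\ gdist adj w b = (gdist adj u b).-1.
  move=> u; case: (ltnP 0 (gdist adj u b)) => h.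
    by have [w hw] := gdist_step h; exists w.
  by exists u.
case/choice => nx hnx.
pose g i := iter i nx a.
set L := gdist adj a b.
have c1 : forall i, (i <= L)%N -> gdist adj (g i) b = (L - i)%N.
  elim=> [|i IH] hi; first by rewrite /g /= subn0.
  rewrite /g iterS -/(g i).
  have hi' : (i <= L)%N by lia.
  have := IH hi' => e1.
  have [_ ->] := hnx (g i) ltac:(lia).
  rewrite e1; lia.
have c2 : forall i, (i < L)%N -> (gdist adj (g i) (g i.+1) <= 1)%N.
  move=> i hi; rewrite /g iterS -/(g i); apply: gdist_adj.
  by have [? _] := hnx (g i) ltac:(rewrite c1; lia).
have c3 : forall i k, (i + k <= L)%N -> (gdist adj (g i) (g (i + k)) <= k)%N.
  move=> i; elim=> [|k IH] h; first by rewrite addn0 gdist_xx.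
  have := gdist_tri (g i) (g (i + k)) (g (i + k.+1)).
  have := IH ltac:(lia); rewrite addnS => h1.
  have := c2 (i + k)%N ltac:(lia); lia.
have c4 : forall i j, (i <= j)%N -> (j <= L)%N -> gdist adj (g i) (g j) = (j - i)%N.
  move=> i j hij hj; apply/eqP; rewrite eqn_leq; apply/andP; split.
    by have := c3 i (j - i)%N ltac:(lia); rewrite subnKC.
  have := gdist_tri (g i) (g j) b; rewrite !c1 //; lia.
exists g; split; first by [].
split; first by apply: gdist_eq0; rewrite c1 // subnn.
move=> i j hi hj; case: (leqP i j) => hij.
  rewrite c4 //; lia.
rewrite gdist_sym c4 //; lia.
Qed.

Lemma geodesic_len g L y z : geodesic adj g L y z -> gdist adj y z = L.
Proof.
case=> [<- [<- h]]; rewrite h //; lia.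
Qed.

Lemma geodesic_d0 g L y z i : geodesic adj g L y z -> (i <= L)%N -> gdist adj y (g i) = i.
Proof.
case=> [<- [_ h]] hi; rewrite h //; lia.
Qed.

Lemma geodesic_dL g L y z i : geodesic adj g L y z -> (i <= L)%N -> gdist adj (g i) z = (L - i)%N.
Proof.
case=> [_ [<- h]] hi; rewrite h //; lia.
Qed.

End GraphLemmas.

Lemma count_classes (T : choiceType) (Q : nat -> T -> Prop) (N : nat) :
  (forall m (s : seq T), uniq s -> (forall z, z \in s -> Q m z) -> (size s <= N)%N) ->
  forall K (s : seq T), uniq s ->
    (forall z, z \in s -> exists2 m, (m < K)%N & Q m z) -> (size s <= K * N)%N.
Proof.
move=> hN; elim=> [|K IH] s us hs.
  case: s us hs => [//|z s] _ hs.
  by have [m] := hs z (mem_head _ _).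
rewrite -(count_predC (fun z => `[< Q K z >]) s) mulSn.
apply: leq_add.
  rewrite -size_filter; apply: (hN K); first exact: filter_uniq.
  by move=> z; rewrite mem_filter => /andP[h _]; apply/asboolP.
rewrite -size_filter; apply: IH; first exact: filter_uniq.
move=> z; rewrite mem_filter => /andP[/= hn /hs [m hm hq]].
exists m => //; move: hm; rewrite ltnS leq_eqVlt => /orP[/eqP em|//].
by subst m; case/negP: hn; apply/asboolP.
Qed.

Section Hyp.
Variables (R : realType) (T : choiceType) (adj : T -> T -> Prop) (delta : R) (e : T).
Hypothesis symA : forall x y, adj x y -> adj y x.
Hypothesis conn : connected_graph adj.
Hypothesis bg : bounded_geometry adj.
Hypothesis hyp : rips_hyperbolic adj delta.

Lemma Fbound : exists C : nat, forall x n (s : seq T), (1 <= n)%N -> uniq s ->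
  (forall z, z \in s -> Fset adj delta e x (n %/ 4) n z) -> (size s <= C * n)%N.
Proof.
have [dd hdd] : exists dd : nat, (delta <= dd%:R)%R.
  exists (Num.bound `|delta|%R); apply: le_trans (ler_norm delta) _.
  by apply/ltW/archi_boundP.
have [Nd hNd] := bg dd.
have [N6 hN6] := bg (6 * dd)%N.
exists ((4 + dd) * Nd + N6)%N => x n s n1 us hs.
have hM : (n %/ 4 <= n)%N := leq_div n 4.
case: (leqP n (2 * dd)) => hn.
  apply: (@leq_trans N6).
    apply: (hN6 x) => // z /hs [_ [y' [L [g [i [hxy hg /andP[hi1 hi2] hiL <-]]]]]].
    have := gdist_tri conn x y' (g i); rewrite (geodesic_d0 hg hiL); lia.
  exact: leq_trans (leq_addl _ _) (leq_pmulr _ n1).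
have [g2 hg2] := geodesic_ex symA conn e x.
set L2 := gdist adj e x in hg2.
apply: (@leq_trans ((n %/ 4 + 2*n + dd + 1) * Nd)).
  apply: (count_classes (Q := fun m z => (gdist adj (g2 (L2 - m)) z <= dd)%N)).
    by move=> m s' us' hs'; apply: (hNd (g2 (L2 - m))).
  by [].
  move=> z /hs [_ [y' [L [g [i [hxy hg /andP[hi1 hi2] hiL <-]]]]]].
  have [g3 hg3] := geodesic_ex symA conn y' x.
  have e2 := geodesic_d0 hg hiL.
  have s1 := gdist_sym symA conn x y'.
  have [j [[hj hd]|[hj hd]]] := hyp hg hg2 hg3 hiL.
    have hd' : (gdist adj (g i) (g2 j) <= dd)%N.
      by rewrite -(ler_nat R); exact: le_trans hd hdd.
    exists (L2 - j)%N; last by rewrite subKn // (gdist_sym symA conn).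
    have e1 := geodesic_dL hg2 hj.
    have t1 := gdist_tri conn (g2 j) (g i) x.
    have t2 := gdist_tri conn (g i) y' x.
    have s2 := gdist_sym symA conn (g i) y'.
    have s3 := gdist_sym symA conn (g i) (g2 j).
    lia.
  have hd' : (gdist adj (g i) (g3 j) <= dd)%N.
    by rewrite -(ler_nat R); exact: le_trans hd hdd.
  have e3 := geodesic_d0 hg3 hj.
  have e4 := geodesic_len hg3.
  have t := gdist_tri conn y' (g3 j) (g i).
  have s2 := gdist_sym symA conn (g i) (g3 j).
  exfalso; lia.
have k1 : (n %/ 4 + 2*n + dd + 1 <= (4+dd)*n)%N by nia.
apply: leq_trans (leq_mul k1 (leqnn Nd)) _.
nia.
Qed.

End Hyp.

Lemma sum_shift1 (P Q : nat -> bool) A D : (forall k, P k -> Q (k + D)%N) ->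
  (\sum_(0 <= k < A) P k + \sum_(0 <= k < D) Q k <= \sum_(0 <= k < A + D) Q k)%N.
Proof.
move=> h; elim: A => [|A IH]; first by rewrite big_geq // add0n.
rewrite addSn !big_nat_recr //=.
have : (P A <= Q (A + D))%N by case: (P A) (h A) => // ->.
lia.
Qed.

Lemma sum_shift2 (Q : nat -> bool) A D :
  (\sum_(0 <= k < A + D) Q k <= \sum_(0 <= k < A) Q k + D)%N.
Proof.
elim: D => [|D IH]; first by rewrite !addn0.
rewrite addnS big_nat_recr //=; have := leq_b1 (Q (A + D)%N); lia.
Qed.

Lemma sum_shift (P Q : nat -> bool) A D : (forall k, P k -> Q (k + D)%N) ->
  (\sum_(0 <= k < A) P k <= \sum_(0 <= k < A) Q k + D)%N.
Proof.
move=> h; have := sum_shift1 A h; have := sum_shift2 Q A D; lia.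
Qed.

Lemma sum_const_count (R : realType) (T : eqType) (s : seq T) (P : pred T) (c : R) :
  (\sum_(z <- s | P z) c = (count P s)%:R * c)%R.
Proof.
elim: s => [|z s IH]; first by rewrite big_nil mul0r.
rewrite big_cons IH /=; case: (P z) => //=; rewrite ?add0n //.
by rewrite natrD mulrDl mul1r.
Qed.

Lemma esum_bound (R : realType) (T : choiceType) (f : T -> R) (p a : R) (N : nat) :
  (0 < p)%R -> (0 <= a)%R -> (forall z, `|f z| <= a)%R ->
  (forall s : seq T, uniq s -> (forall z, z \in s -> f z != 0%R) -> (size s <= N)%N) ->
  (esum [set: T] (fun z => (`|f z| `^ p)%:E) <= (N%:R * a `^ p)%:E)%E.
Proof.
move=> p0 a0 hf hN.
apply: ge_ereal_sup => _ [A [finA _] <-].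
rewrite fsbig_finite //= sumEFin lee_fin.
rewrite (bigID (fun z => f z != 0%R)) /=.
rewrite [X in (_ + X)%R]big1; last first.
  by move=> z /negPn/eqP ->; rewrite normr0 powR0 // gt_eqF.
rewrite addr0.
apply: (@le_trans _ _ (\sum_(z <- finmap.enum_fset (fset_set A) | f z != 0%R) a `^ p)%R).
  apply: ler_sum => z _; apply: ge0_ler_powR => //; first exact: ltW.
rewrite sum_const_count ler_wpM2r ?powR_ge0 // ler_nat -size_filter.
apply: hN; first by apply: filter_uniq; apply: finmap.fset_uniq.
by move=> z; rewrite mem_filter => /andP[].
Qed.

Section Hyp2.
Variables (R : realType) (T : choiceType) (adj : T -> T -> Prop) (delta : R) (e : T).
Hypothesis symA : forall x y, adj x y -> adj y x.
Hypothesis conn : connected_graph adj.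

Lemma Fset_mono x k k' n z : (k <= k')%N -> Fset adj delta e x k n z ->
  Fset adj delta e x k' n z.
Proof.
move=> hk [h1 [y' [L [g [i [hxy hg hi hiL hz]]]]]]; split=> //.
by exists y', L, g, i; split=> //; apply: leq_trans hk.
Qed.

Lemma Fset_shift x y k n z : Fset adj delta e y k n z ->
  Fset adj delta e x (k + gdist adj x y) n z.
Proof.
move=> [h1 [y' [L [g [i [hxy hg hi hiL hz]]]]]]; split=> //.
exists y', L, g, i; split=> //; have := gdist_tri conn x y y'; lia.
Qed.

Lemma H_eq x n z : Hfun adj delta e x n z =
  (n%:R^-1 * (\sum_(0 <= k < (n %/ 4).+1) (z \in Fset adj delta e x k n : nat))%:R)%R.
Proof. by rewrite /Hfun natr_sum. Qed.

Lemma H_diff x y n z :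
  (`|Hfun adj delta e x n z - Hfun adj delta e y n z| <= (gdist adj x y)%:R / n%:R)%R.
Proof.
rewrite !H_eq -mulrBr normrM normfV normr_nat mulrC.
apply: ler_wpM2r; first by rewrite invr_ge0.
have h1 := @sum_shift (fun k => z \in Fset adj delta e y k n)
  (fun k => z \in Fset adj delta e x k n) (n %/ 4).+1 (gdist adj x y)
  ltac:(by move=> k; rewrite !in_setE; apply: Fset_shift).
have h2 := @sum_shift (fun k => z \in Fset adj delta e x k n)
  (fun k => z \in Fset adj delta e y k n) (n %/ 4).+1 (gdist adj y x)
  ltac:(by move=> k; rewrite !in_setE; apply: Fset_shift).
rewrite (gdist_sym symA conn y x) in h2.
move: h1 h2.
set Sx := (\sum_(0 <= k < _) (z \in Fset adj delta e x k n : nat))%N.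
set Sy := (\sum_(0 <= k < _) (z \in Fset adj delta e y k n : nat))%N.
move=> h1 h2.
have r1 : (Sx%:R <= Sy%:R + (gdist adj x y)%:R :> R)%R by rewrite -natrD ler_nat.
have r2 : (Sy%:R <= Sx%:R + (gdist adj x y)%:R :> R)%R by rewrite -natrD ler_nat.
rewrite ler_norml; apply/andP; split; lra.
Qed.

Lemma H_zero x n z : ~ Fset adj delta e x (n %/ 4) n z -> Hfun adj delta e x n z = 0%R.
Proof.
move=> hF; rewrite H_eq big_nat big1 ?mulr0 // => k /andP[_ hk].
apply/eqP; rewrite eqb0; apply/negP; rewrite in_setE => h; apply: hF.
by apply: Fset_mono h; lia.
Qed.

End Hyp2.

Local Open Scope ring_scope.

Theorem lemma3p4 (R : realType) (T : choiceType) (adj : T -> T -> Prop)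
    (delta : R) (e : T) (p : R) :
  simplicial_graph adj -> connected_graph adj -> bounded_geometry adj ->
  0 <= delta -> rips_hyperbolic adj delta -> 1 <= p ->
  exists C : R, forall (r : R) (n : nat) (x y : T),
    0 <= r -> (1 <= n)%N -> (gdist adj x y)%:R <= r ->
    (lpnorm p (fun z => (Hfun adj delta e x n z - Hfun adj delta e y n z)%R)
      <= (2 * C * (r + 1) * (n%:R `^ (- ((p - 1) / p))))%:E)%E.
Proof.
move=> [symA _] conn bg d0 hyp p1.
have [C hC] := Fbound e symA conn bg hyp.
exists (C.+1)%:R => r n x y r0 n1 hxy.
have p0 : 0 < p by apply: lt_le_trans p1; exact: ltr01.
set f := fun z => (Hfun adj delta e x n z - Hfun adj delta e y n z).
have n0 : (0 < n%:R :> R) by rewrite ltr0n.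
set a := r / n%:R.
have a0 : 0 <= a by rewrite divr_ge0 // ltW.
have hfa : forall z, `|f z| <= a.
  move=> z; apply: le_trans (H_diff delta e symA conn x y n z) _.
  by rewrite ler_wpM2r // invr_ge0 ltW.
have hsupp : forall s : seq T, uniq s -> (forall z, z \in s -> f z != 0) ->
    (size s <= 2 * (C.+1 * n))%N.
  move=> s us hs.
  pose Q := fun m z => if m == 0%N then Fset adj delta e x (n %/ 4) n z
     else Fset adj delta e y (n %/ 4) n z.
  have hN : forall m (s' : seq T), uniq s' -> (forall z, z \in s' -> Q m z) ->
      (size s' <= C * n)%N.
    move=> m s' us' hs'; rewrite /Q in hs'.
    by case: (m == 0%N) in hs'; [exact: (hC _ _ _ n1 us' hs')|exact: (hC _ _ _ n1 us' hs')].
  have hQ : forall z, z \in s -> exists2 m, (m < 2)%N & Q m z.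
    move=> z /hs hz.
    have [hx|hx] := pselect (Fset adj delta e x (n %/ 4) n z); first by exists 0%N.
    have [hy|hy] := pselect (Fset adj delta e y (n %/ 4) n z); first by exists 1%N.
    exfalso; move/eqP: hz; apply; rewrite /f (H_zero hx) (H_zero hy) subrr.
    by [].
  apply: leq_trans (count_classes hN us hQ) _.
  by rewrite leq_mul2l leq_mul2r leqnSn !orbT.
have hE := esum_bound p0 a0 hfa hsupp.
rewrite /lpnorm.
have q0 : 0 <= p^-1 by rewrite invr_ge0 ltW.
apply: le_trans (gt0_ler_poweR q0 _ _ hE) _.
- rewrite in_itv /= leey andbT; apply: esum_ge0 => z _; rewrite lee_fin powR_ge0.
  by [].
- by rewrite in_itv /= leey andbT lee_fin mulr_ge0 ?powR_ge0.
rewrite poweR_EFin lee_fin.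
rewrite powRM ?powR_ge0 // -powRrM mulfV ?gt_eqF // powRr1 //.
rewrite mulnA natrM powRM ?ler0n //.
have e1 : - ((p - 1) / p) = p^-1 - 1 by field; rewrite gt_eqF.
rewrite e1 powRB; last by apply/implyP => _; rewrite gt_eqF.
rewrite powRr1 ?ler0n //.
set X := (2 * C.+1)%:R : R.
have X1 : 1 <= X by rewrite /X ler1n muln_gt0.
have hX : X `^ p^-1 <= X.
  rewrite -{2}(powRr1 (le_trans ler01 X1)); apply: ler_powR => //.
  by rewrite invf_le1.
have -> : 2 * C.+1%:R = X by rewrite /X natrM.
set u := n%:R `^ p^-1.
have u0 : 0 <= u by rewrite powR_ge0.
have -> : X `^ p^-1 * u * a = X `^ p^-1 * r * (u / n%:R) by rewrite /a; ring.
apply: ler_pM; rewrite ?divr_ge0 ?ler0n ?mulr_ge0 ?powR_ge0 //.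
apply: ler_pM; rewrite ?powR_ge0 //.
lra.
Qed.
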